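(* Let $S$ be a string of length $n$ over a totally ordered alphabet, with Lyndon array $\lambda$, and let $(i,j,p)$ be a decreasing run in $S$. Then there is exactly one index $i_0\in[i,i+p)$ such that $\lambda[i_0]=p$.
   Context: For $i\in[1,n+1]$, $S_i=S[i..n]$ is the suffix starting at $i$ ($S_{n+1}$ empty); $\prec$ is the lexicographical order induced by the alphabet order. A positive integer $p$ is a period of a nonempty substring $S[i..j]$ if $S[x]=S[x+p]$ for all $x\in[i,j-p]$. A run is a triple $(i,j,p)$ with $1\le i\le j\le n$ such that $p$ is the smallest period of $S[i..j]$, $j-i+1\ge 2p$, and neither $(i-1,j,p)$ (when $i>1$) nor $(i,j+1,p)$ (when $j<n$) satisfies these two properties. A run $(i,j,p)$ is decreasing if $S_i\succ S_{i+p}$. A Lyndon word is a nonempty string that is strictly lexicographically smaller than all of its non-trivial cyclic shifts. The Lyndon array is defined by $\lambda[i]=\max\{j-i+1 \mid j\in[i,n],\ S[i..j] \text{ is a Lyndon word}\}$ for $i\in[1,n]$. *)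

(* Defs.v *)
From mathcomp Require Import all_boot all_order.
Set Implicit Arguments. Unset Strict Implicit. Unset Printing Implicit Defensive.
Import Order.TTheory.

(* Strings are sequences over a totally ordered alphabet T : orderType d.
   Positions are 1-based as in the paper: S[x] = nth _ s (x-1). *)
Section Strings.
Context {d : Order.disp_t} {T : orderType d}.

(* strict lexicographic order induced by the alphabet order
   (a proper prefix is smaller), via MathComp's seqlexi *)
Definition lex_lt (u v : seq T) : bool := ((u : seqlexi T) < v)%O.

Definition suf (s : seq T) (i : nat) : seq T := drop i.-1 s.

(* S[i..j] (1-based, inclusive) *)
Definition substr (s : seq T) (i j : nat) : seq T := drop i.-1 (take j s).

Definition is_period (w : seq T) (p : nat) : Prop :=
  0 < p /\ forall (x0 : T) (x : nat), x + p < size w -> nth x0 w x = nth x0 w (x + p).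

Definition smallest_period (w : seq T) (p : nat) : Prop :=
  is_period w p /\ forall q, is_period w q -> p <= q.

Definition run_props (s : seq T) (i j p : nat) : Prop :=
  smallest_period (substr s i j) p /\ 2 * p <= j - i + 1.

Definition is_run (s : seq T) (i j p : nat) : Prop :=
  [/\ 1 <= i <= j, j <= size s, run_props s i j p,
      ~ (1 < i /\ run_props s i.-1 j p) &
      ~ (j < size s /\ run_props s i j.+1 p)].

Definition decreasing_run (s : seq T) (i j p : nat) : Prop :=
  is_run s i j p /\ lex_lt (suf s (i + p)) (suf s i).

Definition lyndon (w : seq T) : bool :=
  (0 < size w) && [forall k : 'I_(size w), (0 < k) ==> lex_lt w (rot k w)].

Definition lyndon_array (s : seq T) (i : nat) : nat :=
  \max_(i <= j < (size s).+1 | lyndon (substr s i j)) (j - i + 1).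

End Strings.

(* Main.v *)
Require Import Defs.
From mathcomp Require Import all_boot all_order.
From mathcomp Require Import zify.
Set Implicit Arguments. Unset Strict Implicit. Unset Printing Implicit Defensive.
Import Order.TTheory.
Open Scope order_scope.

Section Lex.
Context {d : Order.disp_t} {T : orderType d}.
Implicit Types (u v w b x y : seq T).

Lemma lex_irr u : lex_lt u u = false.
Proof. by rewrite /lex_lt ltxx. Qed.

Lemma lex_asym u v : lex_lt u v -> lex_lt v u -> False.
Proof. by rewrite /lex_lt => H1 H2; move: (lt_trans H1 H2); rewrite ltxx. Qed.

Lemma lex_cat_l b x y : lex_lt (b ++ x) (b ++ y) = lex_lt x y.
Proof.
elim: b => [//|c b IH] /=. by rewrite -IH /lex_lt /= eqhead_ltxiE.
Qed.

Lemma lex_cat_eqsize b x y : size x = size y -> lex_lt (x ++ b) (y ++ b) -> lex_lt x y.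
Proof.
elim: x y => [|a x IH] [|c y] //=.
- by move=> _; rewrite lex_irr.
- move=> [] /IH {}IH; rewrite /lex_lt /= !ltxi_cons => /andP[-> /=].
  by move=> /implyP Hi; apply/implyP => /Hi; apply: IH.
Qed.

Lemma lex_diff (x0 : T) t0 : forall u v, (t0 < size u)%N -> (t0 < size v)%N ->
  (forall t, (t < t0)%N -> nth x0 u t = nth x0 v t) -> nth x0 u t0 < nth x0 v t0 ->
  lex_lt u v.
Proof.
elim: t0 => [|t0 IH] [|a u] [|c v] //=.
- by move=> _ _ _ H; rewrite /lex_lt /= ltxi_cons (ltW H) /= leNgt H.
- move=> Hu Hv Heq Hlt. have Ha := Heq 0%N isT; rewrite /= in Ha; subst c.
  rewrite /lex_lt /= eqhead_ltxiE; apply: (IH u v Hu Hv) => // t Ht.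
  exact: (Heq t.+1).
Qed.

Lemma lex_diff_conv (x0 : T) t0 : forall u v, (t0 < size u)%N -> (t0 < size v)%N ->
  (forall t, (t < t0)%N -> nth x0 u t = nth x0 v t) -> lex_lt u v ->
  nth x0 u t0 <= nth x0 v t0.
Proof.
elim: t0 => [|t0 IH] [|a u] [|c v] //=.
- by move=> _ _ _; rewrite /lex_lt /= ltxi_cons => /andP[].
- move=> Hu Hv Heq Hlt. have Ha := Heq 0%N isT; rewrite /= in Ha; subst c.
  move: Hlt; rewrite /lex_lt /= eqhead_ltxiE => Hlt; apply: (IH u v Hu Hv) => // t Ht.
  exact: (Heq t.+1).
Qed.

Lemma lyndon_border w b x y : lyndon w -> w = b ++ x -> w = y ++ b ->
  (0 < size b)%N -> (0 < size x)%N -> False.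
Proof.
move=> /andP[_ /forallP Hl] E1 E2 Hb Hx.
have Hs : size x = size y by move: (congr1 size E1); rewrite E2 !size_cat; lia.
have Hy : (0 < size y)%N by lia.
have Hsw : size w = (size b + size x)%N by rewrite E1 size_cat.
have H1 := Hl (Ordinal (_ : size y < size w)%N).
have H2 := Hl (Ordinal (_ : size b < size w)%N).
have := H1 ltac:(lia); rewrite /= Hy /= {1}E1 E2 rot_size_cat lex_cat_l => Hxy.
have := H2 ltac:(lia); rewrite /= Hb /= {1}E2 E1 rot_size_cat => /(lex_cat_eqsize (esym Hs)) Hyx.
exact: lex_asym Hxy Hyx.
Qed.
End Lex.
Close Scope order_scope.
Local Open Scope nat_scope.

Section Gen.
Context {d : Order.disp_t} {T : orderType d}.

Lemma size_substr (s : seq T) i k : k <= size s -> size (substr s i k) = k - i.-1.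
Proof. by move=> H; rewrite /substr size_drop size_takel. Qed.

Lemma nth_substr (x0 : T) (s : seq T) i k t : k <= size s -> t < k - i.-1 ->
  nth x0 (substr s i k) t = nth x0 s (i.-1 + t).
Proof. by move=> H Ht; rewrite /substr nth_drop nth_take //; lia. Qed.

Lemma period_iff (x0 : T) (s : seq T) i k q : k <= size s ->
  (is_period (substr s i k) q <->
   0 < q /\ forall y, i.-1 <= y -> y + q < k -> nth x0 s y = nth x0 s (y + q)).
Proof.
move=> Hk; split.
- move=> [Hq H]; split=> // y H1 H2.
  have := H x0 (y - i.-1); rewrite size_substr // !nth_substr //; try lia.
  have -> : i.-1 + (y - i.-1) = y by lia.
  have -> : i.-1 + (y - i.-1 + q) = y + q by lia.
  by apply; lia.
- move=> [Hq H]; split=> // x1 x; rewrite size_substr // => Hx.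
  rewrite !nth_substr //; try lia.
  rewrite [nth x1 s (_ + x)](@set_nth_default _ s x0 x1); last lia.
  rewrite [nth x1 s (_ + (x + q))](@set_nth_default _ s x0 x1); last lia.
  rewrite addnA; apply: H; lia.
Qed.

Lemma lyndon_rot (w : seq T) k : lyndon w -> 0 < k < size w -> lex_lt w (rot k w).
Proof.
move=> /andP[_ /forallP Hl] /andP[H1 H2].
by have := Hl (Ordinal H2); rewrite /= H1.
Qed.

Lemma bigmax_wit (r : seq nat) (P : pred nat) F :
  0 < \max_(k <- r | P k) F k ->
  exists k, [/\ k \in r, P k & F k = \max_(k <- r | P k) F k].
Proof.
elim: r => [|h t IH]; first by rewrite big_nil.
rewrite big_cons; case: ifP => Ph.
- case: (leqP (F h) (\max_(k <- t | P k) F k)) => Hc.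
  + move=> /IH [k [H1 H2 H3]].
    by exists k; split=> //; rewrite inE H1 orbT.
  + move=> _; exists h; split=> //; by rewrite inE eqxx.
- move=> /IH [k [H1 H2 H3]]; exists k; split=> //; by rewrite inE H1 orbT.
Qed.

Lemma min_exists (f : nat -> seqlexi T) n :
  exists a, a <= n /\ forall b, b <= n -> (f a <= f b)%O.
Proof.
elim: n => [|n [a [Ha H]]].
- by exists 0; split=> // b; rewrite leqn0 => /eqP ->.
- case: (leP (f a) (f n.+1)) => Hc.
  + exists a; split; first lia.
    move=> b; rewrite leq_eqVlt => /orP[/eqP -> //|Hb]; exact: H.
  + exists n.+1; split=> // b; rewrite leq_eqVlt => /orP[/eqP -> //|Hb].
    exact: le_trans (ltW Hc) (H b Hb).
Qed.
End Gen.

Section Core.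
Context {d : Order.disp_t} {T : orderType d}.
Variables (x0 : T) (s : seq T) (i j p : nat).
Hypotheses (Hi : 0 < i) (Hjn : j <= size s) (Hp : 0 < p) (H2p : 2 * p <= j - i + 1).
Hypothesis Hper : forall y, i.-1 <= y -> y + p < j -> nth x0 s y = nth x0 s (y + p).
Hypothesis Hmin : forall q, 0 < q ->
  (forall y, i.-1 <= y -> y + q < j -> nth x0 s y = nth x0 s (y + q)) -> p <= q.
Hypothesis Hdec : j < size s -> (nth x0 s j < nth x0 s (j - p))%O.

Definition c t := nth x0 s (i.-1 + t %% p).

Lemma cP t : c (t + p) = c t.
Proof. by rewrite /c modnDr. Qed.

Lemma s_c y : i.-1 <= y -> y < j -> nth x0 s y = c (y - i.-1).
Proof.
elim: y {-2}y (leqnn y) => [|n IH] y Hy H1 H2.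
- have -> : y = 0 by lia. rewrite /c mod0n; congr nth; lia.
- case: (ltnP (y - i.-1) p) => Hyp.
  + rewrite /c modn_small //; congr nth; lia.
  + have -> : nth x0 s y = nth x0 s (y - p).
      rewrite (Hper (y := y - p)); try lia. congr nth; lia.
    rewrite IH; try lia.
    have -> : y - i.-1 = (y - p - i.-1) + p by lia.
    by rewrite cP.
Qed.

Definition V a := mkseq (fun t => c (a + t)) p.

Lemma size_V a : size (V a) = p.
Proof. by rewrite size_mkseq. Qed.

Lemma rot_V a k : k <= p -> rot k (V a) = V (a + k).
Proof.
move=> Hk; apply: (@eq_from_nth _ x0); first by rewrite size_rot !size_V.
rewrite size_rot size_V => t Ht.
rewrite /rot nth_cat size_drop size_V.
case: ifP => Hc.
- rewrite nth_drop !nth_mkseq //; try lia. by rewrite addnA.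
- rewrite nth_take; last lia. rewrite !nth_mkseq; try lia.
  have -> : a + k + t = (a + (t - (p - k))) + p by lia.
  by rewrite cP.
Qed.

Lemma V_p a : V (a + p) = V a.
Proof. by apply: eq_mkseq => t; rewrite addnAC cP. Qed.

Lemma V_sub a : a < p -> substr s (i + a) (i + a + p).-1 = V a.
Proof.
move=> Ha; apply: (@eq_from_nth _ x0).
  rewrite size_substr ?size_V; lia.
rewrite size_substr; last lia. move=> t Ht.
rewrite nth_substr //; try lia. rewrite nth_mkseq; last lia.
rewrite s_c; try lia. congr c; lia.
Qed.

Lemma lyndon_V_unique a b : a < p -> b < p -> lyndon (V a) -> lyndon (V b) -> a = b.
Proof.
wlog: a b / a <= b.
  move=> W Ha Hb La Lb; case: (leqP a b) => H; first exact: W.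
  by apply/esym; apply: W => //; lia.
move=> Hab Ha Hb La Lb; case: (ltnP a b) => H; last lia.
have H1 := lyndon_rot (k := b - a) La; rewrite rot_V in H1; last lia.
rewrite (_ : a + (b - a) = b) in H1; last lia.
have H2 := lyndon_rot (k := p - (b - a)) Lb; rewrite rot_V in H2; last lia.
rewrite (_ : b + (p - (b - a)) = a + p) in H2; last lia.
rewrite V_p in H2.
exfalso; apply: (lex_asym (H1 _) (H2 _)); rewrite size_V; lia.
Qed.

Lemma c_mod u : c u = c (u %% p).
Proof. by rewrite /c modn_mod. Qed.

Lemma lyndon_V_exists : exists a, a < p /\ lyndon (V a).
Proof.
have [a [Ha Hm]] := min_exists (fun a => (V a : seqlexi T)) p.-1.
exists a; split; first lia.
rewrite /lyndon size_V Hp /=; apply/forallP => k; apply/implyP => Hk0.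
have Hk : k < p := ltn_ord k.
rewrite rot_V; last lia.
have Hle : (V a <= V (a + k) :> seqlexi T)%O.
  have -> : V (a + k) = V ((a + k) %% p).
    by apply: eq_mkseq => t; rewrite c_mod [in RHS]c_mod modnDml.
  apply: Hm; have := ltn_pmod (a + k) Hp; lia.
rewrite /lex_lt lt_neqAle Hle andbT; apply/eqP => Heq.
have Hck : forall u, c u = c (u + k).
  move=> u; rewrite c_mod [in RHS]c_mod -modnDml.
  have := ltn_pmod u Hp; move: (u %% p) => r Hr.
  rewrite -(c_mod (r + k)).
  have Ht : forall t, t < p -> c (a + t) = c (a + k + t).
    move=> t Ht; have := congr1 (fun w => nth x0 w t) Heq; rewrite /= !nth_mkseq //.
  case: (leqP a r) => Har.
  - have E := Ht (r - a) ltac:(lia).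
    rewrite (_ : a + (r - a) = r) in E; last lia.
    rewrite (_ : a + k + (r - a) = r + k) in E; last lia. exact: E.
  - have E := Ht (r + p - a) ltac:(lia).
    rewrite (_ : a + (r + p - a) = r + p) in E; last lia.
    rewrite (_ : a + k + (r + p - a) = (r + k) + p) in E; last lia.
    by rewrite !cP in E.
have := Hmin (q := k) Hk0.
have : p <= k -> False by lia. move=> Hf H; apply: Hf; apply: H => y H1 H2.
rewrite !s_c; try lia. have -> : y + k - i.-1 = (y - i.-1) + k by lia. exact: Hck.
Qed.


Lemma nth_rot_lt (w : seq T) k t : t < size w - k ->
  nth x0 (rot k w) t = nth x0 w (k + t).
Proof.
move=> Ht; rewrite /rot nth_cat size_drop Ht nth_drop //.
Qed.

Lemma upper a k : a < p -> i + a <= k -> k <= size s ->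
  lyndon (substr s (i + a) k) -> k - (i + a) + 1 <= p.
Proof.
move=> Ha H1 H2 HL; rewrite leqNgt; apply/negP => Hm.
set L := substr s (i + a) k in HL.
have HsL : size L = k - (i.-1 + a) by rewrite /L size_substr //; lia.
case: (leqP k j) => Hkj.
- apply: (lyndon_border (b := take (size L - p) L) (x := drop (size L - p) L)
          (y := take p L) HL).
  + by rewrite cat_take_drop.
  + have -> : take (size L - p) L = drop p L.
      apply: (@eq_from_nth _ x0); first by rewrite size_drop size_takel; lia.
      rewrite size_takel; last lia. move=> t Ht.
      rewrite nth_take // nth_drop /L !nth_substr; try lia.
      rewrite !s_c; try lia.
      rewrite (_ : (i + a).-1 + (p + t) - i.-1 = (a + t) + p); last lia.
      rewrite cP; congr c; lia.
    by rewrite cat_take_drop.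
  + rewrite size_takel; lia.
  + rewrite size_drop; lia.
- have Hjs : j < size s by lia.
  have Hr := lyndon_rot (k := p) HL.
  have Hr2 : lex_lt (rot p L) L.
    apply: (lex_diff (x0 := x0) (t0 := j - p - (i.-1 + a))).
    + rewrite size_rot; lia.
    + lia.
    + move=> t Ht; rewrite nth_rot_lt; last lia.
      rewrite /L !nth_substr; try lia.
      rewrite (_ : (i + a).-1 + (p + t) = ((i + a).-1 + t) + p); last lia.
      symmetry; apply: Hper; lia.
    + rewrite nth_rot_lt; last lia.
      rewrite /L !nth_substr; try lia.
      rewrite (_ : (i + a).-1 + (p + (j - p - (i.-1 + a))) = j); last lia.
      rewrite (_ : (i + a).-1 + (j - p - (i.-1 + a)) = j - p); last lia.
      exact: Hdec.
  apply: (lex_asym (Hr _) Hr2); lia.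
Qed.

Lemma la_V a : a < p -> lyndon (V a) -> lyndon_array s (i + a) = p.
Proof.
move=> Ha HL; apply/eqP; rewrite eqn_leq; apply/andP; split.
- apply/bigmax_leqP_seq => k; rewrite mem_index_iota => /andP[H1 H2] Hk.
  apply: upper => //.
- rewrite /lyndon_array.
  have H := @leq_bigmax_seq _ (index_iota (i + a) (size s).+1)
     (fun k => lyndon (substr s (i + a) k)) (fun k => k - (i + a) + 1) ((i + a + p).-1).
  rewrite /= V_sub // in H.
  have E : (i + a + p).-1 - (i + a) + 1 = p by lia.
  rewrite E in H; apply: H => //.
  rewrite mem_index_iota; lia.
Qed.

Lemma la_uniq b : b < p -> lyndon_array s (i + b) = p -> lyndon (V b).
Proof.
move=> Hb E.
have := @bigmax_wit (index_iota (i + b) (size s).+1)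
   (fun k => lyndon (substr s (i + b) k)) (fun k => k - (i + b) + 1).
rewrite /lyndon_array in E; rewrite E => /(_ Hp) [k [Hk HL Hv]].
rewrite mem_index_iota in Hk.
have Ek : k = (i + b + p).-1 by lia.
by rewrite Ek V_sub in HL.
Qed.

End Core.

Theorem lemma7 (d : Order.disp_t) (T : orderType d) (s : seq T) (i j p : nat) :
  decreasing_run s i j p ->
  exists! i0 : nat, (i <= i0 < i + p)%N /\ lyndon_array s i0 = p.
Proof.
move=> [[/andP[Hi1 Hij] Hjn [[Hper0 Hmin0] H2p] Hl Hr] Hdec0].
have Hi : (0 < i)%N by exact: Hi1.
have Hij' : (i <= j)%N by exact: Hij.
have Hjn' : (j <= size s)%N by exact: Hjn.
have H2p' : (2 * p <= j - i + 1)%N by exact: H2p.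
have x0 : T by case: s Hjn' {Hjn Hper0 Hmin0 Hl Hr Hdec0 H2p} => [|x ?]; [move=> /= ?; exfalso; lia|move=> _; exact x].
have [Hp Hper] := proj1 (@period_iff _ _ x0 s i j p Hjn') Hper0.
have Hmin : forall q, (0 < q)%N ->
    (forall y, (i.-1 <= y)%N -> (y + q < j)%N -> nth x0 s y = nth x0 s (y + q)) ->
    (p <= q)%N.
  move=> q Hq H; apply: Hmin0; apply/(@period_iff _ _ x0 s i j q Hjn'); by split.
have Hdec : (j < size s)%N -> (nth x0 s j < nth x0 s (j - p))%O.
  move=> Hjs.
  have Hle : (nth x0 s j <= nth x0 s (j - p))%O.
    have := lex_diff_conv (x0 := x0) (t0 := j - (i + p).-1) (u := drop (i + p).-1 s)
              (v := drop i.-1 s).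
    rewrite !size_drop !nth_drop.
    rewrite (_ : (i + p).-1 + (j - (i + p).-1) = j); last lia.
    rewrite (_ : i.-1 + (j - (i + p).-1) = j - p); last lia.
    apply; try lia; last exact: Hdec0.
    move=> t Ht; rewrite !nth_drop.
    rewrite (_ : (i + p).-1 + t = (i.-1 + t) + p); last lia.
    symmetry; apply: Hper; lia.
  rewrite lt_neqAle Hle andbT; apply/eqP => Heq.
  apply: Hr; split=> //; split; last by (apply: leq_trans H2p' _; lia).
  split.
  - apply/(@period_iff _ _ x0 s i j.+1 p Hjs); split=> // y H1 H2.
    case: (ltnP (y + p) j) => H3; first exact: Hper.
    rewrite (_ : y + p = j); last lia. rewrite (_ : y = j - p); last lia. by [].
  - move=> q /(@period_iff _ _ x0 s i j.+1 q Hjs) [Hq H]; apply: Hmin => // y H1 H2.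
    apply: H => //; lia.
have [a [Ha La]] := lyndon_V_exists Hi Hjn' Hp H2p' Hper Hmin Hdec.
exists (i + a); split.
- split; first by (apply/andP; split; lia).
  exact: (la_V Hi Hjn' Hp H2p' Hper Hdec Ha La).
- move=> i0 [/andP[H1 H2] E].
  have Eb : i0 = i + (i0 - i) by lia.
  rewrite Eb in E.
  have Lb := la_uniq Hi Hjn' Hp H2p' Hper Hdec (_ : (i0 - i < p)%N) E.
  have := lyndon_V_unique Hi Hjn' Hp H2p' Hdec Ha (_ : (i0 - i < p)%N) La (Lb ltac:(lia)).
  lia.
Qed.
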